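(* For $n\geq1$ let $\sigma(n)$ denote the set of eigenvalues of the adjacency matrix of the connected anti-regular graph with loops $G_n$ on $n$ vertices. Then the closure of $\bigcup_{n\geq1}\sigma(n)$ in $\mathbb R$ is $(-\infty,-\tfrac12]\cup[\tfrac12,\infty)$.
   Context: A graph with loops is a pair $(V,E)$ with $E$ a set of 2-element multisets of $V$ (loops allowed, at most one per vertex, no multiple edges); the degree of a vertex counts a loop once. An anti-regular graph with loops is one in which all vertex degrees are distinct; $G_n$ denotes the unique (up to isomorphism) connected one on $n$ vertices, whose degree sequence is $(1,2,\ldots,n)$. Its adjacency matrix has diagonal entry $1$ exactly at vertices with a loop. *)

(* Defs.v *)
From Stdlib Require Import Reals List Arith.
Open Scope R_scope.

(* Vertices of G_n are 0,...,n-1.  The connected anti-regular graph with loops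
   G_n: vertices i and j (0-indexed) are adjacent iff i + j >= n - 1
   (1-indexed: i + j >= n + 1).  Vertex i then has exactly i+1 neighbours
   (a loop counted once), so the degree sequence is (1,2,...,n); vertex n-1 is
   adjacent to every vertex, so G_n is connected. *)
Definition Gn_edge (n i j : nat) : bool := Nat.leb n (i + j + 1).

Definition Gn_adj (n i j : nat) : R := if Gn_edge n i j then 1 else 0.

Definition sum_upto (n : nat) (f : nat -> R) : R :=
  fold_right Rplus 0 (map f (seq 0 n)).

Definition is_eigenvalue (n : nat) (M : nat -> nat -> R) (lambda : R) : Prop :=
  exists v : nat -> R,
    (exists i, (i < n)%nat /\ v i <> 0) /\
    forall i, (i < n)%nat -> sum_upto n (fun j => M i j * v j) = lambda * v i.

Definition sigma (n : nat) (lambda : R) : Prop := is_eigenvalue n (Gn_adj n) lambda.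

Definition sigma_union (lambda : R) : Prop := exists n, (1 <= n)%nat /\ sigma n lambda.

(* Main.v *)
Require Import Defs.
From Stdlib Require Import Reals Rtopology.
From Stdlib Require Import Lra Lia List ZArith.
Open Scope R_scope.

Lemma fold_shift (l : list R) (a : R) :
  fold_right Rplus a l = fold_right Rplus 0 l + a.
Proof. induction l; simpl; [ring | rewrite IHl; ring]. Qed.

Lemma sum_upto_S N f : sum_upto (S N) f = sum_upto N f + f N.
Proof.
  unfold sum_upto. rewrite seq_S, map_app, fold_right_app. simpl.
  rewrite fold_shift. ring.
Qed.

Lemma sum_upto_ext N f g : (forall j, (j < N)%nat -> f j = g j) ->
  sum_upto N f = sum_upto N g.
Proof.
  induction N; intros H; [reflexivity|].
  rewrite !sum_upto_S, IHN, H; auto; intros; apply H; lia.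
Qed.

Lemma sum_upto_minus N f g :
  sum_upto N (fun j => f j - g j) = sum_upto N f - sum_upto N g.
Proof.
  induction N; [unfold sum_upto; simpl; ring|].
  rewrite !sum_upto_S, IHN; ring.
Qed.

Lemma sum_upto_delta N a c : (a < N)%nat ->
  sum_upto N (fun j => if Nat.eqb j a then c j else 0) = c a.
Proof.
  induction N; intros H; [lia|].
  rewrite sum_upto_S. destruct (Nat.eqb_spec N a).
  - subst. rewrite (sum_upto_ext _ _ (fun _ => 0)).
    + clear. enough (sum_upto a (fun _ => 0) = 0) by (rewrite H; ring).
      induction a; [unfold sum_upto; simpl; ring|].
      rewrite sum_upto_S, IHa; ring.
    + intros j Hj. destruct (Nat.eqb_spec j a); [lia|auto].
  - rewrite IHN by lia. ring.
Qed.

Lemma argmax n (f : nat -> R) : (1 <= n)%nat ->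
  exists m, (m < n)%nat /\ forall j, (j < n)%nat -> Rabs (f j) <= Rabs (f m).
Proof.
  induction n; intros H; [lia|].
  destruct n.
  - exists 0%nat; split; [lia|]; intros j Hj; replace j with 0%nat by lia; lra.
  - destruct IHn as [m [Hm Hmax]]; [lia|].
    destruct (Rle_dec (Rabs (f m)) (Rabs (f (S n)))).
    + exists (S n); split; [lia|]. intros j Hj.
      destruct (Nat.eq_dec j (S n)); [subst; lra|].
      specialize (Hmax j ltac:(lia)); lra.
    + exists m; split; [lia|]. intros j Hj.
      destruct (Nat.eq_dec j (S n)); [subst; lra|].
      apply Hmax; lia.
Qed.

Lemma sigma_bound n l : Defs.sigma n l -> 1/2 <= Rabs l.
Proof.
  intros [v [[i0 [Hi0 Hv0]] Hev]].
  destruct (argmax n v) as [m [Hm Hmax]]; [lia|].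
  assert (Hvm : 0 < Rabs (v m)).
  { specialize (Hmax i0 Hi0). pose proof (Rabs_pos_lt _ Hv0). lra. }
  set (i := (n - 1 - m)%nat).
  destruct (Nat.eq_dec i 0) as [Hi|Hi].
  -
    assert (E : sum_upto n (fun j => Gn_adj n 0 j * v j) =
                sum_upto n (fun j => if Nat.eqb j m then v j else 0)).
    { apply sum_upto_ext. intros j Hj. unfold Gn_adj, Gn_edge.
      destruct (Nat.leb_spec n (0 + j + 1)); destruct (Nat.eqb_spec j m);
        try lia; ring. }
    rewrite sum_upto_delta in E by lia.
    rewrite Hev in E by lia.
    assert (Rabs (v m) = Rabs l * Rabs (v 0%nat)) by (rewrite <- E, Rabs_mult; auto).
    specialize (Hmax 0%nat ltac:(lia)).
    pose proof (Rabs_pos l).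
    nra.
  - assert (E : sum_upto n (fun j => Gn_adj n i j * v j - Gn_adj n (i-1) j * v j) =
                sum_upto n (fun j => if Nat.eqb j m then v j else 0)).
    { apply sum_upto_ext. intros j Hj. unfold Gn_adj, Gn_edge.
      destruct (Nat.leb_spec n (i + j + 1)); destruct (Nat.leb_spec n (i - 1 + j + 1));
        destruct (Nat.eqb_spec j m); unfold i in *; try lia; ring. }
    rewrite sum_upto_delta, sum_upto_minus in E by lia.
    rewrite !Hev in E by lia.
    assert (Rabs (v m) <= Rabs l * (Rabs (v i) + Rabs (v (i-1)%nat))).
    { rewrite <- E, <- Rmult_minus_distr_l, Rabs_mult.
      apply Rmult_le_compat_l; [apply Rabs_pos|].
      unfold Rminus; eapply Rle_trans; [apply Rabs_triang|]. rewrite Rabs_Ropp; lra. }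
    pose proof (Hmax i ltac:(lia)). pose proof (Hmax (i-1)%nat ltac:(lia)).
    pose proof (Rabs_pos l).
    nra.
Qed.

Lemma tele_step t x : 2 * sin (t/2) * sin (t * (x + 1)) =
  cos (t * (x + 1/2)) - cos (t * (x + 1 + 1/2)).
Proof.
  replace (t * (x + 1/2)) with (t * (x+1) - t/2) by field.
  replace (t * (x + 1 + 1/2)) with (t * (x+1) + t/2) by field.
  rewrite cos_minus, cos_plus. ring.
Qed.

Lemma tele t a N :
  2 * sin (t/2) * sum_upto N (fun j => if Nat.leb a j then sin (t * (INR j + 1)) else 0)
  = cos (t * (INR a + 1/2)) - cos (t * (INR (Nat.max a N) + 1/2)).
Proof.
  induction N.
  - rewrite Nat.max_0_r. unfold sum_upto; simpl. ring.
  - rewrite sum_upto_S, Rmult_plus_distr_l, IHN.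
    destruct (Nat.leb_spec a N).
    + rewrite Nat.max_r by lia. rewrite Nat.max_r by lia.
      rewrite tele_step, S_INR. ring.
    + rewrite Nat.max_l by lia. rewrite Nat.max_l by lia. ring.
Qed.

Lemma eigen n t e : (1 <= n)%nat -> sin (t/2) <> 0 -> sin t <> 0 ->
  (forall y, cos (t * (INR n + 1/2) - y) = e * sin y) ->
  Defs.sigma n (e / (2 * sin (t/2))).
Proof.
  intros Hn Hs Ht Hc.
  exists (fun j => sin (t * (INR j + 1))). split.
  - exists 0%nat. split; [lia|]. simpl. rewrite Rplus_0_l, Rmult_1_r. auto.
  - intros i Hi.
    rewrite (sum_upto_ext _ _ (fun j => if Nat.leb (n-1-i) j then sin (t * (INR j + 1)) else 0)).
    2:{ intros j Hj. unfold Gn_adj, Gn_edge.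
        destruct (Nat.leb_spec n (i + j + 1)); destruct (Nat.leb_spec (n-1-i) j);
        try lia; ring. }
    pose proof (tele t (n-1-i) n) as T.
    rewrite Nat.max_r in T by lia.
    assert (H0 : cos (t * (INR n + 1/2)) = 0).
    { rewrite <- (Rminus_0_r (t * (INR n + 1/2))), Hc, sin_0. ring. }
    rewrite H0 in T.
    assert (Ha : INR (n - 1 - i) = INR n - 1 - INR i).
    { rewrite !minus_INR by lia. simpl. ring. }
    rewrite Ha in T.
    replace (t * (INR n - 1 - INR i + 1/2)) with (t * (INR n + 1/2) - t * (INR i + 1)) in T by ring.
    rewrite Hc in T.
    apply (Rmult_eq_reg_l (2 * sin (t/2))); [|intro; apply Hs; lra].
    rewrite T. field. auto.
Qed.

Lemma nat_unbounded r : exists n : nat, r < INR n.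
Proof.
  destruct (archimed r) as [H1 _].
  destruct (Z_le_gt_dec 0 (up r)).
  - exists (Z.to_nat (up r)). rewrite INR_IZR_INZ, Z2Nat.id by lia. lra.
  - exists 0%nat. simpl. assert (up r < 0)%Z by lia. apply IZR_lt in H. lra.
Qed.

Lemma floor_ex a y : 0 < a -> 0 <= y ->
  exists m : nat, INR m * a <= y < (INR m + 1) * a.
Proof.
  intros Ha Hy. destruct (nat_unbounded (y / a)) as [N HN].
  assert (HN' : y < INR N * a).
  { apply (Rmult_lt_compat_r a) in HN; auto. unfold Rdiv in HN.
    rewrite Rmult_assoc, Rinv_l, Rmult_1_r in HN; lra. }
  clear HN. induction N.
  - simpl in HN'. lra.
  - destruct (Rlt_dec y (INR N * a)).
    + apply IHN; auto.
    + exists N. rewrite S_INR in HN'. lra.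
Qed.

Lemma sign_cos (s : bool) t n m :
  t * (INR n + 1/2) = PI/2 + (if s then PI else 0) + 2 * INR m * PI ->
  forall y, cos (t * (INR n + 1/2) - y) = (if s then -1 else 1) * sin y.
Proof.
  intros H y. rewrite H.
  replace (PI / 2 + (if s then PI else 0) + 2 * INR m * PI - y)
    with ((PI/2 - y + (if s then PI else 0)) + 2 * INR m * PI) by ring.
  rewrite cos_period. destruct s.
  - rewrite neg_cos, cos_shift. ring.
  - rewrite Rplus_0_r, cos_shift. ring.
Qed.

Lemma approx (s : bool) phi0 eta : 0 < phi0 <= PI/2 -> 0 < eta ->
  exists n phi, (1 <= n)%nat /\ 0 < phi < PI/2 /\ phi0 - eta < phi <= phi0 /\
    Defs.sigma n ((if s then -1 else 1) / (2 * sin phi)).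
Proof.
  intros [Hp0 Hp1] Heta. pose proof PI_RGT_0 as HPI. pose proof PI2_3_2.
  set (eta' := Rmin eta (phi0/2)).
  assert (He1 : eta' <= eta) by apply Rmin_l.
  assert (He2 : eta' <= phi0/2) by apply Rmin_r.
  assert (He0 : 0 < eta') by (apply Rmin_pos; lra).
  destruct (nat_unbounded (4 * PI / eta')) as [p Hp].
  set (sn := if s then 1%nat else 0%nat).
  assert (Hsn : INR sn = 0 \/ INR sn = 1) by (unfold sn; destruct s; simpl; auto).
  set (n := (2 * p + 1 + sn)%nat).
  assert (Hn : INR n = 2 * INR p + 1 + INR sn) by (unfold n; rewrite !plus_INR, mult_INR; simpl; ring).
  set (h := PI / (4 * INR n + 2)).
  assert (Hpos : 0 < 4 * INR n + 2) by (pose proof (pos_INR p); lra).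
  assert (Hh : 0 < h) by (unfold h; apply Rdiv_lt_0_compat; lra).
  assert (Hpp : 4 * PI < eta' * INR p).
  { apply (Rmult_lt_compat_l eta') in Hp; auto.
    replace (eta' * (4 * PI / eta')) with (4 * PI) in Hp by (field; lra). lra. }
  assert (H4h : 4 * h < eta').
  { unfold h. apply (Rmult_lt_reg_r (4 * INR n + 2)); auto.
    replace (4 * (PI / (4 * INR n + 2)) * (4 * INR n + 2)) with (4 * PI) by (field; lra).
    pose proof (pos_INR p). nra. }
  assert (Hhalf : h * (2 * INR n + 1) = PI / 2) by (unfold h; field; lra).
  destruct (floor_ex (4 * h) (phi0 - (2 * INR sn + 1) * h)) as [m [Hm1 Hm2]]; [lra | nra |].
  set (phi := (4 * INR m + 2 * INR sn + 1) * h).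
  assert (Hphi0 : 0 < phi) by (unfold phi; pose proof (pos_INR m); pose proof (pos_INR sn); nra).
  assert (Hphi1 : phi <= phi0) by (unfold phi; lra).
  assert (Hphi2 : phi0 - eta < phi) by (unfold phi; lra).
  assert (Hphi3 : phi < PI/2).
  { destruct (Rle_lt_or_eq_dec phi (PI/2)) as [|E]; [lra| auto |].
    exfalso. rewrite <- Hhalf in E. unfold phi in E. rewrite Hn in E.
    rewrite (Rmult_comm h) in E. apply Rmult_eq_reg_r in E; [|lra].
    assert (INR (2 * m) = INR (2 * p + 1)) by (rewrite mult_INR, plus_INR, mult_INR; simpl; lra).
    apply INR_eq in H0. lia. }
  exists n, phi. split; [unfold n; lia|]. split; [lra|]. split; [lra|].
  replace (sin phi) with (sin (2 * phi / 2)) by (f_equal; field).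
  apply eigen.
  - unfold n; lia.
  - replace (2 * phi / 2) with phi by field. apply Rgt_not_eq, sin_gt_0; lra.
  - apply Rgt_not_eq, sin_gt_0; lra.
  - apply (sign_cos s _ _ m).
    replace (2 * phi * (INR n + 1/2)) with (phi * (2 * INR n + 1)) by field.
    unfold phi. replace ((4 * INR m + 2 * INR sn + 1) * h * (2 * INR n + 1))
      with ((4 * INR m + 2 * INR sn + 1) * (h * (2 * INR n + 1))) by ring.
    rewrite Hhalf. unfold sn; destruct s; simpl; field.
Qed.

Lemma abs_sin w : 0 <= w -> Rabs (sin w) <= w.
Proof.
  intros Hw. pose proof PI2_3_2. pose proof (SIN_bound w).
  destruct (Req_dec w 0) as [->|Hw0]; [rewrite sin_0, Rabs_R0; lra|].
  pose proof (sin_lt_x w ltac:(lra)).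
  destruct (Rle_dec 1 w).
  - unfold Rabs; destruct Rcase_abs; lra.
  - assert (0 <= sin w) by (apply sin_ge_0; lra).
    rewrite Rabs_right; lra.
Qed.

Lemma sin_lip a b : 0 <= b <= a -> sin a - sin b <= a - b.
Proof.
  intros H.
  replace (sin a) with (sin ((a+b)/2 + (a-b)/2)) by (f_equal; field).
  replace (sin b) with (sin ((a+b)/2 - (a-b)/2)) by (f_equal; field).
  rewrite sin_plus, sin_minus.
  replace (sin ((a + b) / 2) * cos ((a - b) / 2) + cos ((a + b) / 2) * sin ((a - b) / 2) -
   (sin ((a + b) / 2) * cos ((a - b) / 2) - cos ((a + b) / 2) * sin ((a - b) / 2)))
    with (2 * (cos ((a + b) / 2) * sin ((a - b) / 2))) by ring.
  pose proof (abs_sin ((a-b)/2) ltac:(lra)).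
  pose proof (COS_bound ((a+b)/2)).
  assert (Rabs (cos ((a + b) / 2) * sin ((a - b) / 2)) <= (a-b)/2).
  { rewrite Rabs_mult. assert (Rabs (cos ((a + b) / 2)) <= 1) by (unfold Rabs; destruct Rcase_abs; lra).
    pose proof (Rabs_pos (sin ((a - b) / 2))). pose proof (Rabs_pos (cos ((a + b) / 2))). nra. }
  pose proof (Rle_abs (cos ((a + b) / 2) * sin ((a - b) / 2))). lra.
Qed.

Lemma dens (s : bool) c d : 0 < c <= 1 -> 0 < d ->
  exists l, sigma_union l /\ Rabs (l - (if s then -1 else 1) / (2 * c)) < d.
Proof.
  intros Hc Hd. pose proof PI_RGT_0.
  set (phi0 := asin c).
  assert (Hs0 : sin phi0 = c) by (apply sin_asin; lra).
  pose proof (asin_bound c) as Hb. fold phi0 in Hb.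
  assert (Hp0 : 0 < phi0).
  { destruct (Rlt_dec 0 phi0); auto. exfalso.
    assert (sin phi0 <= sin 0) by (apply sin_incr_1; lra). rewrite sin_0 in H0. lra. }
  set (c2 := sin (phi0/2)).
  assert (Hc2 : 0 < c2) by (apply sin_gt_0; lra).
  set (eta := Rmin (phi0/2) (d * 2 * c2 * c)).
  assert (Ha : eta <= phi0/2) by apply Rmin_l.
  assert (Hb2 : eta <= d * 2 * c2 * c) by apply Rmin_r.
  assert (Heta : 0 < eta) by (apply Rmin_pos; [lra|]; repeat apply Rmult_lt_0_compat; lra).
  destruct (approx s phi0 eta) as [n [phi [Hn [Hphi [Hphi2 Hsig]]]]]; [lra|lra|].
  exists ((if s then -1 else 1) / (2 * sin phi)). split.
  { exists n. auto. }
  assert (Hsp : c2 <= sin phi) by (apply sin_incr_1; lra).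
  assert (Hd1 : 0 <= c - sin phi) by (rewrite <- Hs0; assert (sin phi <= sin phi0) by (apply sin_incr_1; lra); lra).
  assert (Hd2 : c - sin phi <= phi0 - phi) by (rewrite <- Hs0; apply sin_lip; lra).
  replace ((if s then -1 else 1) / (2 * sin phi) - (if s then -1 else 1) / (2 * c))
    with ((if s then -1 else 1) * ((c - sin phi) / (2 * sin phi * c))) by (field; lra).
  rewrite Rabs_mult. replace (Rabs (if s then -1 else 1)) with 1
    by (destruct s; unfold Rabs; destruct Rcase_abs; lra).
  rewrite Rmult_1_l, Rabs_right.
  2:{ apply Rle_ge. unfold Rdiv. apply Rmult_le_pos; [lra|]. left; apply Rinv_0_lt_compat. repeat apply Rmult_lt_0_compat; lra. }
  apply (Rmult_lt_reg_r (2 * sin phi * c)); [repeat apply Rmult_lt_0_compat; lra|].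
  replace ((c - sin phi) / (2 * sin phi * c) * (2 * sin phi * c)) with (c - sin phi) by (field; lra).
  assert (d * 2 * c2 * c <= d * (2 * sin phi * c)).
  { replace (d * (2 * sin phi * c)) with (d * 2 * sin phi * c) by ring.
    apply Rmult_le_compat_r; [lra|]. apply Rmult_le_compat_l; lra. }
  lra.
Qed.

Theorem mainTheorem8 :
  forall x : R, adherence sigma_union x <-> (x <= - (1/2) \/ 1/2 <= x).
Proof.
  intros x; split.
  - intros Had. destruct (Rle_dec x (-(1/2))) as [|H1]; [auto|].
    destruct (Rle_dec (1/2) x) as [|H2]; [auto|]. exfalso.
    assert (Hd : 0 < 1/2 - Rabs x) by (unfold Rabs; destruct Rcase_abs; lra).
    destruct (Had (disc x (mkposreal _ Hd))) as [y [Hy1 [n [_ Hy2]]]].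
    + exists (mkposreal _ Hd). intros z Hz; exact Hz.
    + apply sigma_bound in Hy2. unfold disc in Hy1; simpl in Hy1.
      revert Hy1 Hy2. unfold Rabs; repeat destruct Rcase_abs; lra.
  - intros H V [del Hincl].
    assert (Hex : exists l, sigma_union l /\ Rabs (l - x) < del).
    { destruct H as [H|H].
      + destruct (dens true (-1/(2*x)) del) as [l [Hl1 Hl2]].
        * split.
          -- replace (-1/(2*x)) with (/(-(2*x))) by (field; lra).
             apply Rinv_0_lt_compat; lra.
          -- replace (-1/(2*x)) with (/(-(2*x))) by (field; lra).
             rewrite <- Rinv_1. apply Rinv_le_contravar; lra.
        * apply (cond_pos del).
        * exists l; split; auto.
          replace (-1 / (2 * (-1 / (2 * x)))) with x in Hl2 by (field; lra). auto.
      + destruct (dens false (1/(2*x)) del) as [l [Hl1 Hl2]].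
        * split.
          -- apply Rdiv_lt_0_compat; lra.
          -- replace (1/(2*x)) with (/(2*x)) by (field; lra).
             rewrite <- Rinv_1. apply Rinv_le_contravar; lra.
        * apply (cond_pos del).
        * exists l; split; auto.
          replace (1 / (2 * (1 / (2 * x)))) with x in Hl2 by (field; lra). auto. }
    destruct Hex as [l [Hl1 Hl2]]. exists l. split; [apply Hincl; exact Hl2 | exact Hl1].
Qed.
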